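(* Let $0\le s<n$, $A\in M_{s+1,n-s}$, and $A'=BA$ for some $B\in\mathrm{GL}_{s+1}(\mathbb Q)$. Then $\omega_j(A')=\omega_j(A)$ for all $j=1,\dots,n-s$.
   Context: Higher order exponents: let $V=\mathbb R^{n+1}$ with basis $e_0,\dots,e_n$, $V_0=\mathrm{span}(e_1,\dots,e_n)$, $V_\bullet=\mathrm{span}(e_{s+1},\dots,e_n)$; $e_I=e_{i_1}\wedge\dots\wedge e_{i_j}$; $\bigwedge(V)$ carries the inner product making $\{e_I\}$ orthonormal. $\mathcal S_{n+1,j}$ is the set of $w=v_1\wedge\dots\wedge v_j$ with $v_1,\dots,v_j\in\mathbb Z^{n+1}$ linearly independent; $\pi_\bullet$ is the orthogonal projection $\bigwedge^jV\to\bigwedge^jV_\bullet$. For a matrix $A\in M_{s+1,n-s}$ with rows indexed $0,\dots,s$ and columns $s+1,\dots,n$, let $a_i=\sum_{k=s+1}^na_{i,k}e_k$ and let $R_Ac(w)\in(\bigwedge^{j-1}V_0)^{s+1}$ have $i$-th component $\sum_{J\subset\{1,\dots,n\},\#J=j-1}\langle(e_i+a_i)\wedge e_J,w\rangle e_J$ (Euclidean norm). For $1\le j\le n-s$, $\omega_j(A)$ is the supremum of $v$ such that there exist $w\in\mathcal S_{n+1,j}$ with arbitrarily large $\|\pi_\bullet(w)\|$ satisfying $\|R_Ac(w)\|<\|\pi_\bullet(w)\|^{-\frac{v+1-j}{j}}$. *)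

(* Defs.v *)
From HB Require Import structures.
From mathcomp Require Import all_boot all_order all_algebra.
From mathcomp Require Import all_classical all_reals.
From mathcomp Require Import ereal exp.
Set Implicit Arguments. Unset Strict Implicit. Unset Printing Implicit Defensive.
Import Order.TTheory GRing.Theory Num.Theory.
Local Open Scope ring_scope.
Local Open Scope classical_set_scope.

Section Omega.
Variable R : realType.

(* V = R^{n+1}, coordinates indexed by 'I_n.+1 (e_0,...,e_n).
   A j-vector v_1 /\ ... /\ v_j (rows of M) has coefficient on
   e_I = e_{i_1} /\ ... /\ e_{i_j} (i_1 < ... < i_j) equal to the j x j
   minor of M on the columns I (enum I is increasing). *)
Definition wcoord (j m : nat) (M : 'M[R]_(j, m.+1)) (I : {set 'I_m.+1}) : R :=
  \det (\matrix_(k < j, l < j) M k (nth ord0 (enum I) l)).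

(* inner product on /\^j V making {e_I} orthonormal *)
Definition wdot (j m : nat) (M N : 'M[R]_(j, m.+1)) : R :=
  \sum_(I : {set 'I_m.+1} | #|I| == j) wcoord M I * wcoord N I.

(* || pi_bullet(w) ||, V_bullet = span(e_{s+1},...,e_n) *)
Definition proj_norm (s j n : nat) (M : 'M[R]_(j, n.+1)) : R :=
  Num.sqrt (\sum_(I : {set 'I_n.+1} | (#|I| == j) && [forall k in I, (s < k)%N])
              wcoord M I ^+ 2).

(* e_i + a_i, a_i = sum_{k=s+1}^n a_{i,k} e_k; column c of A is index s+1+c *)
Definition eia (s n : nat) (A : 'M[R]_(s.+1, n - s)) (i : 'I_s.+1) : 'rV[R]_n.+1 :=
  \row_k (((i : nat) == k)%:R + \sum_(c < n - s | (s.+1 + c == k)%N) A i c).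

(* the j vectors u, e_{J_1}, ..., e_{J_{j-1}} (J increasing) whose wedge is u /\ e_J *)
Definition wedge_eJ (j n : nat) (u : 'rV[R]_n.+1) (J : {set 'I_n.+1}) : 'M[R]_(j, n.+1) :=
  \matrix_(k < j, l < n.+1)
     (if (k : nat) == 0%N then u 0 l else ((nth ord0 (enum J) k.-1 == l)%:R)).

Definition Rc_norm (s n j : nat) (A : 'M[R]_(s.+1, n - s)) (M : 'M[R]_(j, n.+1)) : R :=
  Num.sqrt (\sum_(i < s.+1)
     \sum_(J : {set 'I_n.+1} | (#|J| == j.-1) && (ord0 \notin J))
        (wdot (wedge_eJ j (eia A i) J) M) ^+ 2).

(* v is admissible: there are w = v_1 /\ ... /\ v_j in S_{n+1,j} (rows of an
   integer matrix of rank j) with arbitrarily large ||pi_bullet(w)|| and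
   ||R_A c(w)|| < ||pi_bullet(w)||^{-(v+1-j)/j}. *)
Definition omega_admissible (s n j : nat) (A : 'M[R]_(s.+1, n - s)) (v : R) : Prop :=
  forall X : R, exists M : 'M[int]_(j, n.+1),
    let Mr := map_mx (fun z : int => z%:~R) M : 'M[R]_(j, n.+1) in
    row_free Mr /\ X < proj_norm s Mr /\
    Rc_norm A Mr < powR (proj_norm s Mr) (- ((v + 1 - j%:R) / j%:R)).

Definition omega (s n j : nat) (A : 'M[R]_(s.+1, n - s)) : \bar R :=
  ereal_sup [set v%:E | v in @omega_admissible s n j A].

End Omega.

(* Main.v *)
Require Import Defs.
From HB Require Import structures.
From mathcomp Require Import all_boot all_order all_algebra.
From mathcomp Require Import all_classical all_reals.
From mathcomp Require Import ereal exp.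
From mathcomp Require Import fingroup perm.
Import Order.TTheory GRing.Theory Num.Theory.
Local Open Scope ring_scope.
Set Implicit Arguments. Unset Strict Implicit. Unset Printing Implicit Defensive.

Section CB.
Variable R : realType.

Definition gI (m k : nat) (I : {set 'I_m.+1}) (l : 'I_k) : 'I_m.+1 :=
  nth ord0 (enum I) l.

Lemma gI_inj m k (I : {set 'I_m.+1}) : #|I| = k -> injective (@gI m k I).
Proof.
move=> cI a b /eqP; rewrite /gI nth_uniq ?enum_uniq // -?cardE ?cI //.
by move/eqP/val_inj.
Qed.

Lemma gI_mem m k (I : {set 'I_m.+1}) (l : 'I_k) : #|I| = k -> gI I l \in I.
Proof.
by move=> cI; rewrite /gI -mem_enum mem_nth // -cardE cI.
Qed.

Lemma gI_image m k (I : {set 'I_m.+1}) : #|I| = k ->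
  [set gI I l | l : 'I_k] = I.
Proof.
move=> cI; apply/eqP; rewrite eqEcard; apply/andP; split.
  by apply/fintype.subsetP => x /imsetP [l _ ->]; apply: gI_mem.
by rewrite card_imset ?cardsT ?card_ord ?cI //; apply: gI_inj.
Qed.

Lemma CB k m (N M : 'M[R]_(k, m.+1)) :
  \det (N *m M^T) = \sum_(I : {set 'I_m.+1} | #|I| == k) wcoord N I * wcoord M I.
Proof.
pose G (f : {ffun 'I_k -> 'I_m.+1}) :=
  (\prod_r N r (f r)) * \det (\matrix_(r, r') M r' (f r)).
transitivity (\sum_f G f).
  rewrite /determinant.
  have E1 (s : 'S_k) : \prod_r (N *m M^T) r (s r) =
      \sum_(f : {ffun 'I_k -> 'I_m.+1}) \prod_r (N r (f r) * M (s r) (f r)).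
    rewrite -(bigA_distr_bigA (fun r l => N r l * M (s r) l)) /=; apply: eq_bigr => r _; rewrite mxE.
    by apply: eq_bigr => l _; rewrite mxE.
  under eq_bigr => s _ do rewrite E1 big_distrr /=.
  rewrite exchange_big /=; apply: eq_bigr => f _.
  rewrite /G /determinant big_distrr /=; apply: eq_bigr => s _.
  rewrite big_split /= mulrCA; congr (_ * (_ * _)).
  by apply: eq_bigr => r _; rewrite mxE.
rewrite (bigID (fun f : {ffun 'I_k -> 'I_m.+1} => injectiveb f)) /= [X in _ + X]big1 ?addr0; last first.
  move=> f /injectivePn [r1 [r2 Dr Ef]].
  rewrite /G (determinant_alternate Dr) ?mulr0 // => r'.
  by rewrite !mxE Ef.
rewrite (partition_big (fun f : {ffun 'I_k -> 'I_m.+1} => [set f x | x : 'I_k])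
   (fun I => #|I| == k)) /=; last first.
  move=> f /injectiveP fi; by rewrite card_imset // card_ord.
apply: eq_bigr => I /eqP cI.
pose h (p : 'S_k) : {ffun 'I_k -> 'I_m.+1} := [ffun r => gI I (p r)].
have hinj : {in [set: 'S_k] &, injective h}.
  move=> p1 p2 _ _ /ffunP E; apply/permP => r.
  by move: (E r); rewrite !ffunE => /(gI_inj cI).
rewrite (eq_bigl (fun f => f \in [set h p | p in [set: 'S_k]])); last first.
  move=> f; apply/idP/imsetP.
    case/andP => /injectiveP fi /eqP fI.
    have fin r : f r \in I by rewrite -fI; apply: imset_f.
    pose p0 (r : 'I_k) : 'I_k := insubd r (index (f r) (enum I)).
    have ix r : (index (f r) (enum I) < k)%N.
      suff : (index (f r) (enum I) < size (enum I))%N by rewrite -cardE cI.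
      by rewrite index_mem mem_enum fin.
    have p0E r : gI I (p0 r) = f r.
      rewrite /p0 /gI insubdK; [by rewrite nth_index // mem_enum fin | exact: ix].
    have p0i : injective p0.
      by move=> a b Eab; apply: fi; rewrite -!p0E Eab.
    exists (perm p0i) => //; apply/ffunP => r.
    by rewrite ffunE permE p0E.
  case=> p _ ->; apply/andP; split.
    apply/injectiveP => a b; rewrite !ffunE => /(gI_inj cI) /perm_inj //.
  apply/eqP; rewrite -[RHS](gI_image cI); apply/setP => x.
  apply/imsetP/imsetP => [[r _ ->]|[l _ ->]].
    by exists (p r) => //; rewrite ffunE.
  by exists (p^-1 l)%g => //; rewrite ffunE permKV.
rewrite big_imset //=.
rewrite /wcoord mulrC [X in _ * X]/determinant big_distrr /=.
apply: eq_big => [p|p _]; first by rewrite finset.in_setT. rewrite /G.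
have -> : \det (\matrix_(r, r') M r' (h p r)) = (-1) ^+ p * \det (\matrix_(r, l) M r (nth ord0 (enum I) l)).
  rewrite -[\det (\matrix_(r, l) M r _)]det_tr -det_perm -det_mulmx -row_permE.
  congr (\det _); apply/matrixP => r r'; rewrite !mxE ffunE /gI.
  done.
have -> : \prod_r N r (h p r) = \prod_i (\matrix_(k0, l) N k0 (nth ord0 (enum I) l)) i (p i).
  by apply: eq_bigr => r _; rewrite ffunE mxE.
by rewrite mulrCA [RHS]mulrC -mulrA.
Qed.


Definition EJ (k n : nat) (J : {set 'I_n.+1}) : 'M[R]_(k, n.+1) :=
  \matrix_(r, l) (nth ord0 (enum J) r == l)%:R.

Lemma wedge_col k n (u : 'rV[R]_n.+1) J :
  wedge_eJ k.+1 u J = col_mx u (EJ k J).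
Proof.
apply/matrixP => r l; rewrite !mxE; case: splitP => [r' Er|r' Er].
  by rewrite Er (ord1 r') eqxx.
by rewrite Er /= mxE.
Qed.

Lemma det_col0 p (A : 'M[R]_p) j0 : (forall i, A i j0 = 0) -> \det A = 0.
Proof.
by move=> H; rewrite (expand_det_col _ j0) big1 // => i _; rewrite H mul0r.
Qed.

Lemma wcoord_zero_col k n (Z : 'M[R]_(k, n.+1)) (I : {set 'I_n.+1}) x :
  #|I| = k -> x \in I -> (forall r, Z r x = 0) -> wcoord Z I = 0.
Proof.
move=> cI xI Hz.
have ix : (index x (enum I) < k)%N.
  suff : (index x (enum I) < size (enum I))%N by rewrite -cardE cI.
  by rewrite index_mem mem_enum.
apply: (@det_col0 _ _ (Ordinal ix)) => r; rewrite mxE /=.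
by rewrite nth_index ?mem_enum // Hz.
Qed.

Lemma wcoord_EJ k n (J I : {set 'I_n.+1}) : #|J| = k -> #|I| = k ->
  wcoord (EJ k J) I = (J == I)%:R.
Proof.
move=> cJ cI; have [<-|nJI] := eqVneq J I.
  rewrite /wcoord -(det1 _ k); congr (\det _); apply/matrixP => r l; rewrite !mxE.
  rewrite nth_uniq ?enum_uniq // -?cardE ?cJ //.
have [x xI xJ] : exists2 x, x \in I & x \notin J.
  apply/exists_inP; rewrite -negb_forall_in; apply/negP => /forall_inP sub.
  have sIJ : I \subset J by apply/fintype.subsetP => y /sub.
  move: nJI; rewrite eq_sym eqEcard sIJ cJ cI leqnn.
  by [].
apply: (wcoord_zero_col cI xI) => r; rewrite mxE.
have : nth ord0 (enum J) r \in J.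
  by rewrite -mem_enum mem_nth // -cardE cJ.
by case: eqP => // ->; rewrite (negPf xJ).
Qed.

Lemma row'0_col' k m (a : 'rV[R]_m) (W : 'M[R]_(k, m)) (c : 'I_m) :
  row' (ord0 : 'I_(1 + k)) (col' c (col_mx a W)) = col' c W.
Proof.
apply/matrixP => i j; rewrite !mxE; case: splitP => [i' /= Ei|i' /= Ei].
  by move: (ltn_ord i'); rewrite -Ei /bump leq0n.
have -> : i' = i :> 'I_k by apply: val_inj; move: Ei; rewrite /bump leq0n add1n => -[].
by [].
Qed.

Lemma col'_mulmx k m p (Z : 'M[R]_(k, m)) (N : 'M[R]_(m, p)) c :
  col' c (Z *m N) = Z *m col' c N.
Proof.
by apply/matrixP => i j; rewrite !mxE; apply: eq_bigr => t _; rewrite mxE.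
Qed.

Lemma phi_row0 k m (y : 'rV[R]_m) (Z : 'M[R]_(k, m)) (N : 'M[R]_(m, k.+1)) :
  \det (col_mx y Z *m N) =
  \sum_c (y *m N) 0 c * cofactor (col_mx (0 : 'rV[R]_(k.+1)) (Z *m N) : 'M_(k.+1)) 0 c.
Proof.
rewrite mul_col_mx (expand_det_row _ ord0); apply: eq_bigr => c _.
rewrite /cofactor !row'0_col'; congr (_ * _).
by rewrite mxE; case: splitP => // j' _; rewrite (ord1 j').
Qed.

Lemma RB0 k n (u : 'rV[R]_n.+1) (N : 'M[R]_(n.+1, k.+1)) :
  exists H : {set 'I_n.+1} -> R, forall Z : 'M[R]_(k, n.+1),
    \det (col_mx u Z *m N) = \sum_(I : {set 'I_n.+1} | #|I| == k) wcoord Z I * H I.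
Proof.
exists (fun I => \sum_c (u *m N) 0 c * ((-1) ^+ (0 + c) * wcoord (col' c N)^T I)).
move=> Z; rewrite phi_row0.
under eq_bigr => c _ do rewrite /cofactor row'0_col' col'_mulmx -[col' c N]trmxK CB
  big_distrr big_distrr /=.
rewrite exchange_big /=; apply: eq_bigr => I _.
rewrite big_distrr /=; apply: eq_bigr => c _.
rewrite [X in _ * X = _]mulrCA. by rewrite (mulrCA ((u *m N) 0 c)).
Qed.

Lemma RB k n (u : 'rV[R]_n.+1) (N : 'M[R]_(n.+1, k.+1)) (Z : 'M[R]_(k, n.+1)) :
  (forall r, Z r ord0 = 0) ->
  \det (col_mx u Z *m N) =
  \sum_(I : {set 'I_n.+1} | (#|I| == k) && (ord0 \notin I)) wcoord Z I * \det (col_mx u (EJ k I) *m N).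
Proof.
move=> Z0; have [H HH] := RB0 u N.
have HE (I : {set 'I_n.+1}) : #|I| = k -> \det (col_mx u (EJ k I) *m N) = H I.
  move=> cI; rewrite HH (bigD1 I) ?cI //= big1 ?addr0.
    by rewrite wcoord_EJ // eqxx mul1r.
  move=> I' /andP [/eqP cI' nI']; rewrite wcoord_EJ // eq_sym (negPf nI').
  by rewrite mul0r.
rewrite HH (bigID (fun I : {set 'I_n.+1} => ord0 \in I)) /= big1 ?add0r.
  by apply: eq_bigr => I /andP [/eqP cI _]; rewrite HE.
move=> I /andP [/eqP cI oI]; rewrite (wcoord_zero_col cI oI) ?mul0r //.
Qed.

Lemma rowop k n (u : 'rV[R]_n.+1) (Z : 'M[R]_(k, n.+1)) (N : 'M[R]_(n.+1, k.+1)) :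
  u 0 ord0 = 1 ->
  \det (col_mx u Z *m N) = \det (col_mx u (Z - col ord0 Z *m u) *m N).
Proof.
move=> u1.
have -> : col_mx u (Z - col ord0 Z *m u) =
    block_mx 1 0 (- col ord0 Z) 1 *m col_mx u Z.
  by rewrite mul_block_col !mul1mx mul0mx addr0 mulNmx addrC.
rewrite -mulmxA (det_mulmx (block_mx _ _ _ _)) det_lblock !det1 !mul1r.
by [].
Qed.

Lemma rowop_col0 k n (u : 'rV[R]_n.+1) (Z : 'M[R]_(k, n.+1)) :
  u 0 ord0 = 1 -> forall r, (Z - col ord0 Z *m u) r ord0 = 0.
Proof.
move=> u1 r; rewrite !mxE big_ord1 !mxE u1 mulr1 subrr //.
Qed.

End CB.
Arguments EJ {R} k {n} J.

Section KL.
Variable R : realType.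
Variables (s n : nat) (A : 'M[R]_(s.+1, n - s)).

Local Notation x := (eia A).

Lemma eia0 (m : 'I_s.+1) : x m 0 ord0 = ((m : nat) == 0%N)%:R.
Proof. by rewrite mxE big_pred0 ?addr0 // => c; rewrite addSn. Qed.

Lemma phi_lin k (Z : 'M[R]_(k, n.+1)) (N : 'M[R]_(n.+1, k.+1)) :
  exists C : 'I_k.+1 -> R, forall y : 'rV[R]_n.+1,
    \det (col_mx y Z *m N) = \sum_c (y *m N) 0 c * C c.
Proof. by eexists => y; rewrite phi_row0. Qed.

Lemma phiD k (Z : 'M[R]_(k, n.+1)) (N : 'M[R]_(n.+1, k.+1)) (a b : 'rV[R]_n.+1) :
  \det (col_mx (a + b) Z *m N) = \det (col_mx a Z *m N) + \det (col_mx b Z *m N).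
Proof.
have [C HC] := phi_lin Z N; rewrite !HC -big_split /=.
by apply: eq_bigr => c _; rewrite mulmxDl mxE mulrDl.
Qed.

Lemma phi_sum k (Z : 'M[R]_(k, n.+1)) (N : 'M[R]_(n.+1, k.+1)) (lam : 'I_s.+1 -> R)
  (y : 'I_s.+1 -> 'rV[R]_n.+1) :
  \det (col_mx (\sum_m lam m *: y m) Z *m N) =
  \sum_m lam m * \det (col_mx (y m) Z *m N).
Proof.
have [C HC] := phi_lin Z N; rewrite HC.
under [RHS]eq_bigr => m _ do rewrite HC big_distrr /=.
rewrite exchange_big /=; apply: eq_bigr => c _.
rewrite mulmx_suml summxE big_distrl /=; apply: eq_bigr => m _.
by rewrite -scalemxAl mxE mulrA.
Qed.

Lemma Rc_term k (M : 'M[R]_(k.+1, n.+1)) (i : 'I_s.+1) (J : {set 'I_n.+1}) :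
  #|J| = k -> ord0 \notin J ->
  `|\det (col_mx (x i) (EJ k J) *m M^T)| <= Rc_norm A M.
Proof.
move=> cJ oJ; rewrite /Rc_norm -sqrtr_sqr; apply: ler_wsqrtr.
rewrite (bigD1 i) //= (bigD1 J) /=; last by rewrite cJ eqxx oJ.
rewrite /wdot -CB wedge_col -addrA lerDl.
apply: addr_ge0; first by apply: sumr_ge0 => I _; apply: sqr_ge0.
by apply: sumr_ge0 => i' _; apply: sumr_ge0 => I _; apply: sqr_ge0.
Qed.

Lemma B1 k (u : 'rV[R]_n.+1) (Z : 'M[R]_(k, n.+1)) (N : 'M[R]_(n.+1, k.+1)) beta :
  u 0 ord0 = 1 ->
  (forall I : {set 'I_n.+1}, #|I| = k -> ord0 \notin I ->
     `|\det (col_mx u (EJ k I) *m N)| <= beta) ->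
  `|\det (col_mx u Z *m N)| <=
    (\sum_(I : {set 'I_n.+1} | (#|I| == k) && (ord0 \notin I))
        `|wcoord (Z - col ord0 Z *m u) I|) * beta.
Proof.
move=> u1 Hb; rewrite (rowop _ _ u1) (RB _ _ (rowop_col0 Z u1)) mulr_suml.
apply: le_trans (ler_norm_sum _ _ _) _; apply: ler_sum => I /andP [/eqP cI oI].
by rewrite normrM ler_wpM2l // Hb.
Qed.

Lemma KL k (lam : 'I_s.+1 -> R) (Z : 'M[R]_(k, n.+1)) :
  exists K, forall M : 'M[R]_(k.+1, n.+1),
    `|\det (col_mx (\sum_m lam m *: x m) Z *m M^T)| <= K * Rc_norm A M.
Proof.
pose cc (u : 'rV[R]_n.+1) := \sum_(I : {set 'I_n.+1} | (#|I| == k) && (ord0 \notin I))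
        `|wcoord (Z - col ord0 Z *m u) I|.
pose x0 := x ord0.
have x01 : x0 0 ord0 = 1 by rewrite eia0.
have Km (m : 'I_s.+1) M : `|\det (col_mx (x m) Z *m M^T)| <=
    (cc x0 + cc (x0 + x m) *+ 2) * Rc_norm A M.
  have Rc0 : 0 <= Rc_norm A M by apply: sqrtr_ge0.
  have H0 : `|\det (col_mx x0 Z *m M^T)| <= cc x0 * Rc_norm A M.
    by apply: B1 => // I cI oI; apply: Rc_term.
  have [->|m0] := eqVneq m ord0.
    apply: le_trans H0 _; rewrite ler_wpM2r // lerDl mulrn_wge0 //.
    by apply: sumr_ge0 => I _.
  have u1 : (x0 + x m) 0 ord0 = 1.
    have m0n : ((m : nat) == 0%N) = false by apply/negbTE; apply: contra m0 => /eqP h; apply/eqP/val_inj.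
    by rewrite mxE x01 eia0 m0n addr0.
  have H1 : `|\det (col_mx (x0 + x m) Z *m M^T)| <= cc (x0 + x m) * (Rc_norm A M *+ 2).
    apply: B1 => // I cI oI; rewrite phiD mulr2n.
    by apply: le_trans (ler_normD _ _) _; rewrite lerD // Rc_term.
  have -> : \det (col_mx (x m) Z *m M^T) =
      \det (col_mx (x0 + x m) Z *m M^T) - \det (col_mx x0 Z *m M^T).
    by rewrite phiD addrAC subrr add0r.
  apply: le_trans (ler_normB _ _) _.
  by rewrite mulrDl addrC lerD // mulrnAl -mulrnAr.
exists (\sum_m `|lam m| * (cc x0 + cc (x0 + x m) *+ 2)) => M.
rewrite phi_sum mulr_suml; apply: le_trans (ler_norm_sum _ _ _) _.
apply: ler_sum => m _; rewrite normrM -mulrA ler_wpM2l //.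
Qed.

End KL.

Lemma sum_delta (R : realType) (p : nat) (i : 'I_p) (F : 'I_p -> R) :
  \sum_(m < p) ((i : nat) == m)%:R * F m = F i.
Proof.
rewrite (bigD1 i) //= eqxx mul1r big1 ?addr0 // => m ne.
by rewrite (_ : ((i : nat) == m) = false) ?mul0r //; apply/negbTE; rewrite eq_sym.
Qed.

Section BD.
Variable R : realType.
Variables (s n : nat).
Hypothesis hsn : (s < n)%N.

Definition BD (a : R) (C : 'M[R]_(s.+1)) : 'M[R]_(n.+1) :=
  \matrix_(k, l) if ((k <= s) && (l <= s))%N then a * C (inord k) (inord l)
                 else a * ((k == l)%:R).

Lemma inord_lt (m : 'I_s.+1) : (m < n.+1)%N.
Proof. by apply: leq_trans (ltn_ord m) _; rewrite ltnS ltnW. Qed.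

Lemma BD_row (v : 'rV[R]_n.+1) a C (l : 'I_n.+1) :
  (v *m BD a C) 0 l = if (l <= s)%N then a * \sum_(m < s.+1) v 0 (inord m) * C m (inord l)
                      else a * v 0 l.
Proof.
rewrite mxE; case: ifP => ls.
  pose F (t : nat) := v 0 (inord t) * (a * C (inord t) (inord l)).
  rewrite big_distrr /=.
  rewrite (eq_bigr (fun m : 'I_s.+1 => F m)); last first.
    by move=> m _; rewrite /F inord_val mulrCA.
  rewrite (big_ord_widen n.+1 F) //; last by rewrite ltnS ltnW.
  rewrite [RHS]big_mkcond /=; apply: eq_bigr => t _; rewrite /F inord_val mxE ls andbT.
  case: ifP => ts; rewrite ltnS ts //.
  rewrite (_ : (t == l) = false) ?mulr0 ?mul0r //.
  by apply/negbTE; apply: contraFneq ts => ->.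
rewrite (bigD1 l) //= big1 ?addr0; first by rewrite mxE ls andbF eqxx mulr1 mulrC.
by move=> t tl; rewrite mxE ls andbF (negPf tl) mulr0 mulr0.
Qed.

Lemma BD_mul a b C D : BD a C *m BD b D = BD (a * b) (C *m D).
Proof.
apply/matrixP => k l.
have -> : (BD a C *m BD b D) k l = (row k (BD a C) *m BD b D) 0 l.
  by rewrite -row_mul [RHS]mxE.
rewrite BD_row [RHS]mxE; case: ifP => ls; rewrite ?andbT ?andbF.
  case: ifP => ks.
    rewrite mxE (mulrC a b) -mulrA; congr (_ * _); rewrite big_distrr /=.
    apply: eq_bigr => m _; rewrite !mxE ks /= (inordK (inord_lt m)).
    by rewrite -ltnS ltn_ord /= inord_val mulrA.
  rewrite big1 ?mulr0; last first.
    move=> m _; rewrite !mxE ks /= (_ : (k == inord m) = false) ?mulr0 ?mul0r //.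
    apply/negbTE; apply: contraFneq ks => ->.
    by rewrite (inordK (inord_lt m)) -ltnS ltn_ord.
  rewrite (_ : (k == l) = false) ?mulr0 //; apply/negbTE.
  by apply: contraFneq ks => ->.
by rewrite !mxE ls andbF mulrA [b * a]mulrC.
Qed.

Lemma BD1 : BD 1 1 = 1%:M.
Proof.
apply/matrixP => k l; rewrite !mxE; case: ifP => [/andP [ks ls]|_]; last by rewrite mul1r.
rewrite mul1r.
congr (_%:R); congr (nat_of_bool _); apply/idP/idP => [/eqP E|/eqP ->//]; apply/eqP/val_inj.
by move: (congr1 val E); rewrite /= !inordK ?ltnS.
Qed.

End BD.

Lemma mapI_mul (R : realType) m p q (M : 'M[int]_(m, p)) (P : 'M[int]_(p, q)) :
  map_mx (fun z : int => (z%:~R : R)) (M *m P) =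
  map_mx (fun z : int => z%:~R) M *m map_mx (fun z : int => z%:~R) P.
Proof. exact: (map_mxM intr M P). Qed.

Lemma mapQ_mul (R : realType) m p q (M : 'M[rat]_(m, p)) (P : 'M[rat]_(p, q)) :
  map_mx (fun z : rat => (ratr z : R)) (M *m P) =
  map_mx (fun z : rat => ratr z) M *m map_mx (fun z : rat => ratr z) P.
Proof. exact: (map_mxM ratr M P). Qed.

Lemma scale_int (p : nat) (B : 'M[rat]_p) :
  exists qz : int, (0 < qz) /\ exists D : 'M[int]_p, forall i j, (D i j)%:~R = qz%:~R * B i j.
Proof.
exists (\prod_(ij : 'I_p * 'I_p) denq (B ij.1 ij.2)); split.
  by apply: prodr_gt0 => ij _; apply: denq_gt0.
exists (\matrix_(i, j) (numq (B i j) * \prod_(ij : 'I_p * 'I_p | ij != (i, j)) denq (B ij.1 ij.2))).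
move=> i j; rewrite mxE [in RHS](bigD1 (i, j)) //= !rmorphM /=.
set o := (_ : int)%:~R.
have dnz : (denq (B i j))%:~R != 0 :> rat by rewrite intr_eq0 denq_neq0.
rewrite -{2}[B i j]divq_num_den.
rewrite [RHS]mulrC mulrA.
by rewrite divfK.
Qed.
From mathcomp Require Import zify.

Lemma sum_bound (R : realType) (I : finType) (P : pred I) (T : Type)
  (f : I -> T -> R) (g : T -> R) :
  (forall i, exists K, forall t, f i t <= K * g t) ->
  exists K, forall t, \sum_(i | P i) f i t <= K * g t.
Proof.
move=> H; have [Kf HK] := choice H.
exists (\sum_(i | P i) Kf i) => t; rewrite mulr_suml; apply: ler_sum => i _.
exact: HK.
Qed.

Section Transfer.
Variable R : realType.
Variables (s n : nat).
Hypothesis hsn : (s < n)%N.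

Lemma eia_lo (A : 'M[R]_(s.+1, n - s)) m (l : 'I_n.+1) : (l <= s)%N ->
  eia A m 0 l = ((m : nat) == l)%:R.
Proof.
move=> ls; rewrite mxE big_pred0 ?addr0 // => c.
by apply/negbTE/eqP => E; move: ls; rewrite -E; lia.
Qed.

Lemma eia_hi (A : 'M[R]_(s.+1, n - s)) m (l : 'I_n.+1) : (s < l)%N ->
  eia A m 0 l = \sum_(c < n - s | (s.+1 + c == l)%N) A m c.
Proof.
move=> ls; rewrite mxE (_ : ((m : nat) == l) = false) ?add0r //.
by apply/negbTE/eqP => E; move: (ltn_ord m); rewrite E; lia.
Qed.

Lemma EIA (A : 'M[R]_(s.+1, n - s)) (B' : 'M[R]_(s.+1)) (q : R) (i : 'I_s.+1) :
  eia (B' *m A) i *m BD n q B' = \sum_m (q * B' i m) *: eia A m.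
Proof.
apply/rowP => l; rewrite (BD_row hsn) summxE; case: ifP => ls.
  have H1 (m : 'I_s.+1) : eia (B' *m A) i 0 (inord m) = ((i : nat) == m)%:R.
    by rewrite eia_lo ?inordK ?(inord_lt hsn) // -ltnS ltn_ord.
  under eq_bigr => m _ do rewrite H1.
  rewrite sum_delta.
  have H2 (m : 'I_s.+1) : ((q * B' i m) *: eia A m) 0 l =
      (((inord l : 'I_s.+1) : nat) == m)%:R * (q * B' i m).
    by rewrite mxE eia_lo // inordK ?ltnS // eq_sym mulrC.
  under [RHS]eq_bigr => m _ do rewrite H2.
  by rewrite sum_delta.
rewrite eia_hi ?ltnNge ?ls //.
under [RHS]eq_bigr => m _ do rewrite mxE eia_hi ?ltnNge ?ls // -mulrA big_distrr /=.
under [RHS]eq_bigr => m _ do rewrite big_distrr /=.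
rewrite [RHS]exchange_big big_distrr /=; apply: eq_bigr => c _.
by rewrite mxE big_distrr.
Qed.

Lemma proj_scale k (Mr : 'M[R]_(k.+1, n.+1)) (q : R) (C : 'M[R]_(s.+1)) :
  0 <= q -> proj_norm s (Mr *m (BD n q C)^T) = q ^+ k.+1 * proj_norm s Mr.
Proof.
move=> q0; rewrite /proj_norm.
have E (I : {set 'I_n.+1}) : (#|I| == k.+1) && [forall x in I, (s < x)%N] ->
    wcoord (Mr *m (BD n q C)^T) I ^+ 2 = (q ^+ k.+1) ^+ 2 * wcoord Mr I ^+ 2.
  case/andP => /eqP cI /forall_inP Is.
  rewrite -exprMn; congr (_ ^+ 2); rewrite /wcoord -detZ; congr (\det _).
  apply/matrixP => r l; rewrite !mxE.
  set g := nth ord0 (enum I) l.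
  have gs : (s < g)%N by apply: Is; rewrite -mem_enum mem_nth // -cardE cI.
  have gsF : (g <= s)%N = false by rewrite leqNgt gs.
  rewrite (bigD1 g) //= big1 ?addr0.
    by rewrite !mxE gsF /= eqxx mulr1 mulrC.
  move=> t tg; rewrite !mxE gsF /= eq_sym (negPf tg).
  by rewrite mulr0 mulr0.
under eq_bigr => I HI do rewrite E //.
rewrite -big_distrr sqrtrM ?sqr_ge0 // sqrtr_sqr ger0_norm //.
by apply: exprn_ge0.
Qed.

Lemma Rc_bound (A A2 : 'M[R]_(s.+1, n - s)) k (T : 'M[R]_(n.+1))
  (lam : 'I_s.+1 -> 'I_s.+1 -> R) :
  (forall i, eia A2 i *m T = \sum_m lam i m *: eia A m) ->
  exists C, forall Mr : 'M[R]_(k.+1, n.+1),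
    Rc_norm A2 (Mr *m T^T) <= C * Rc_norm A Mr.
Proof.
move=> HT.
have Hterm (i : 'I_s.+1) (J : {set 'I_n.+1}) : exists K, forall Mr : 'M[R]_(k.+1, n.+1),
    (wdot (wedge_eJ k.+1 (eia A2 i) J) (Mr *m T^T)) ^+ 2 <= K * (Rc_norm A Mr ^+ 2).
  have [K0 HK0] := KL A (lam i) (EJ k J *m T).
  exists (K0 ^+ 2) => Mr.
  rewrite /wdot -CB trmx_mul trmxK mulmxA wedge_col (mul_col_mx (eia A2 i) (EJ k J) T) HT -exprMn.
  rewrite -real_normK ?num_real //; rewrite !expr2.
  by apply: ler_pM; rewrite ?normr_ge0 ?HK0.
have [K HK] : exists K, forall Mr : 'M[R]_(k.+1, n.+1),
    \sum_(i < s.+1) \sum_(J : {set 'I_n.+1} | (#|J| == k.+1.-1) && (ord0 \notin J))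
       (wdot (wedge_eJ k.+1 (eia A2 i) J) (Mr *m T^T)) ^+ 2 <= K * (Rc_norm A Mr ^+ 2).
  apply: sum_bound => i; apply: sum_bound => J; exact: Hterm.
exists (Num.sqrt `|K|) => Mr.
have Rc0 : 0 <= Rc_norm A Mr by apply: sqrtr_ge0.
have <- : Num.sqrt (`|K| * Rc_norm A Mr ^+ 2) = Num.sqrt `|K| * Rc_norm A Mr.
  by rewrite sqrtrM ?normr_ge0 // sqrtr_sqr (ger0_norm Rc0).
rewrite {1}/Rc_norm; apply: ler_wsqrtr; apply: le_trans (HK Mr) _.
by apply: ler_wpM2r; [apply: sqr_ge0 | apply: ler_norm].
Qed.

End Transfer.

Local Notation mI M := (map_mx (fun z : int => (z%:~R : _)) M).

Section Final.
Variable R : realType.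
Variables (s n : nat).
Hypothesis hsn : (s < n)%N.

Lemma transfer (A : 'M[R]_(s.+1, n - s)) (B : 'M[rat]_(s.+1)) k : B \in unitmx ->
  exists (P : 'M[int]_(n.+1)) (c C : R), 0 < c /\
  forall M : 'M[int]_(k.+1, n.+1),
   (row_free (mI M : 'M[R]_(k.+1, n.+1)) -> row_free (mI (M *m P) : 'M[R]_(k.+1, n.+1))) /\
   proj_norm s (mI (M *m P) : 'M[R]_(k.+1, n.+1)) = c * proj_norm s (mI M : 'M[R]_(k.+1, n.+1)) /\
   Rc_norm (map_mx (fun q : rat => ratr q) B *m A) (mI (M *m P) : 'M[R]_(k.+1, n.+1))
     <= C * Rc_norm A (mI M : 'M[R]_(k.+1, n.+1)).
Proof.
move=> hB; set B' := map_mx (fun q : rat => (ratr q : R)) B.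
have [qz [qz0 [D HD]]] := scale_int B.
set q : R := qz%:~R.
have q0 : 0 < q by rewrite ltr0z.
pose PTi : 'M[int]_(n.+1) := \matrix_(a, b)
  if ((a <= s) && (b <= s))%N then D (inord a) (inord b) else qz * (a == b)%:R.
have PTr : map_mx (fun z : int => (z%:~R : R)) PTi = BD n q B'.
  apply/matrixP => a b; rewrite !mxE; case: ifP => _.
    by rewrite -ratr_int HD rmorphM /= ratr_int.
  by rewrite intrM mulrz_nat.
have [C HC] := Rc_bound k (EIA hsn A B' q).
exists PTi^T, (q ^+ k.+1), C; split; first exact: exprn_gt0.
move=> M.
have E : mI (M *m PTi^T) = mI M *m (BD n q B')^T :> 'M[R]_(k.+1, n.+1).
  by rewrite mapI_mul -map_trmx PTr.
rewrite E; split; [|split].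
- move=> rf; rewrite /row_free mxrankMfree; first by move: rf; rewrite /row_free.
  rewrite (@row_free_unit R n.+1) unitmx_tr.
  have hB' : B' \in unitmx by rewrite (map_unitmx ratr).
  have := BD_mul hsn q q^-1 B' (invmx B').
  rewrite mulfV ?gt_eqF // mulmxV // BD1 => /mulmx1_unit [] //.
- by rewrite proj_scale // ltW.
- exact: HC.
Qed.

Lemma adm_transfer (A : 'M[R]_(s.+1, n - s)) (B : 'M[rat]_(s.+1)) k (v v' : R) :
  B \in unitmx -> v' < v -> omega_admissible k.+1 A v ->
  omega_admissible k.+1 (map_mx (fun q : rat => ratr q) B *m A) v'.
Proof.
move=> hB vv' adm.
have [P [c [C [c0 HP]]]] := transfer A k hB.
set j : R := k.+1%:R.
have j0 : 0 < j by rewrite ltr0n.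
set e := (v + 1 - j) / j; set e' := (v' + 1 - j) / j.
set d := e - e'.
have d0 : 0 < d by rewrite subr_gt0 /e /e' ltr_pM2r ?invr_gt0 // ltrD2r ltrD2r.
set C1 := `|C| + 1.
have C10 : 0 < C1 by rewrite ltr_pwDr ?normr_ge0.
set T := powR (C1 * powR c e') d^-1.
have T0 : 0 <= T by apply: powR_ge0.
move=> X.
have [M /= [rf [XM HM]]] := adm (Num.max (X / c) T).
have [rf' [pE Rc']] := HP M.
exists (M *m P) => /=; split; first exact: rf'.
set p := proj_norm s (mI M : 'M[R]_(k.+1, n.+1)).
have [Xp Tp] : X / c < p /\ T < p by move: XM; rewrite gt_max => /andP [].
have p0 : 0 < p by apply: le_lt_trans Tp.
rewrite pE; split; first by move: Xp; rewrite ltr_pdivrMr // mulrC.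
have Rc0 : 0 <= Rc_norm A (mI M : 'M[R]_(k.+1, n.+1)) by apply: sqrtr_ge0.
have Hp : C1 * powR c e' <= powR p d.
  have -> : C1 * powR c e' = powR T d.
    rewrite /T -powRrM mulVf ?gt_eqF // powRr1 //.
    by rewrite mulr_ge0 ?powR_ge0 // ltW.
  by apply: ge0_ler_powR => //; rewrite ?ltW // nnegrE ?ltW.
have ce0 : 0 < powR c e' by apply: powR_gt0.
have key : C1 * powR p (- e) <= powR (c * p) (- e').
  have -> : powR (c * p) (- e') = powR c (- e') * (powR p d * powR p (- e)).
    rewrite powRM ?ltW // -powRD; last by rewrite (gt_eqF p0) implybT.
    by rewrite /d addrAC subrr add0r.
  rewrite (powRN c e').
  apply: (@le_trans _ _ ((powR c e')^-1 * (C1 * powR c e' * powR p (- e)))).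
    by rewrite [C1 * _ * _]mulrAC [C1 * _ * _]mulrC mulKf ?gt_eqF.
  apply: ler_wpM2l; first by rewrite invr_ge0 ltW.
  by apply: ler_wpM2r; [apply: powR_ge0|].
have H1 : C * Rc_norm A (mI M : 'M[R]_(k.+1, n.+1)) <= C1 * Rc_norm A (mI M : 'M[R]_(k.+1, n.+1)).
  by apply: ler_wpM2r => //; apply: le_trans (ler_norm C) _; rewrite lerDl.
rewrite -/j -/e'.
apply: le_lt_trans Rc' _; apply: le_lt_trans H1 _; apply: lt_le_trans key.
by rewrite ltr_pM2l //; exact: HM.
Qed.

Lemma sup_le (S1 S2 : set R) :
  (forall v, S1 v -> forall v', v' < v -> S2 v') ->
  (ereal_sup [set v%:E | v in S1] <= ereal_sup [set v%:E | v in S2])%E.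
Proof.
move=> H; apply: ub_ereal_sup => _ [v S1v <-].
apply/lee_subgt0Pr => e e0; apply: ereal_sup_ubound; exists (v - e).
  by apply: (H v) => //; rewrite ltrBlDr ltrDl.
by rewrite EFinB.
Qed.

End Final.

Lemma map_inv_mul (R : realType) (p q : nat) (B : 'M[rat]_p) (A : 'M[R]_(p, q)) :
  B \in unitmx ->
  map_mx (fun z : rat => ratr z) (invmx B) *m (map_mx (fun z : rat => ratr z) B *m A) = A.
Proof.
move=> hB; rewrite mulmxA -mapQ_mul mulVmx //.
have -> : map_mx (fun z : rat => (ratr z : R)) (1%:M : 'M[rat]_p) = 1%:M.
  by apply/matrixP => a b; rewrite !mxE ratr_nat.
by rewrite mul1mx.
Qed.

Theorem lemma5p6 (R : realType) (n s : nat) (A : 'M[R]_(s.+1, n - s))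
    (B : 'M[rat]_(s.+1)) :
  (s < n)%N -> B \in unitmx ->
  forall j : nat, (1 <= j <= n - s)%N ->
    omega j (map_mx (fun q : rat => ratr q) B *m A) = omega j A.
Proof.
move=> hsn hB j /andP [j1 _].
case: j j1 => [//|k] _.
rewrite /omega; apply: le_anti; apply/andP; split.
- apply: sup_le => v adm v' vv'.
  have hBi : invmx B \in unitmx by rewrite unitmx_inv.
  have := @adm_transfer R s n hsn _ (invmx B) k v v' hBi vv' adm.
  by rewrite map_inv_mul.
- apply: sup_le => v adm v' vv'.
  exact: (@adm_transfer R s n hsn A B k v v' hB vv' adm).
Qed.
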